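(* Let $\Delta$ be a pure $d$-dimensional APC simplicial complex, $0\le i<d$, let $\Upsilon$ be an $i$-dimensional spanning tree of $\Delta$ with $\tilde H_{i-1}(\Upsilon;\mathbb{Z})=0$, let $\Theta=\Delta_i\setminus\Upsilon_i$, let $L=L_{\Delta,i}$, and let $\tilde L$ be the submatrix of $L$ with rows and columns indexed by $\Theta$, with entries $\ell_{\theta\sigma}$ defined by $\tilde L\theta=\sum_{\sigma\in\Theta}\ell_{\theta\sigma}\sigma$ for $\theta\in\Theta$. Let $\hat\theta$ ($\theta\in\Theta$) be as follows: choose integers $c_{\sigma\theta}$ ($\sigma\in\Upsilon_i$) with $\partial_{\Delta,i}(\theta)=\sum_{\sigma\in\Upsilon_i}c_{\sigma\theta}\partial_{\Delta,i}(\sigma)$ and set $\hat\theta=\theta-\sum_{\sigma\in\Upsilon_i}c_{\sigma\theta}\sigma$. Then for every $\theta\in\Theta$, $$L\theta=\sum_{\sigma\in\Theta}\ell_{\sigma\theta}\,\hat\sigma.$$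
   Context: For a finite simplicial complex $\Delta$, $\Delta_i$ is its set of $i$-faces, $\Delta_{(i)}$ its $i$-skeleton, $f_i=|\Delta_i|$. $C_i(\Delta;\mathbb{Z})$ is free abelian on the (fixed-orientation) $i$-faces, $\partial_{\Delta,i}$ the simplicial boundary map, $\partial^*_{\Delta,i}$ its transpose, and $L_{\Delta,i}=\partial_{i+1}\partial^*_{i+1}$. $\tilde H$ is reduced homology, $\beta_i=\dim_\mathbb{Q}\tilde H_i(\cdot;\mathbb{Q})$. A pure $d$-dimensional complex is APC if $\tilde H_j(\Delta;\mathbb{Q})=0$ for all $j<d$. For a pure $k$-dimensional complex $\Gamma$, a subcomplex $\Upsilon$ with $\Upsilon_{(k-1)}=\Gamma_{(k-1)}$ is a spanning tree if $\tilde H_k(\Upsilon;\mathbb{Z})=0$, $\tilde H_{k-1}(\Upsilon;\mathbb{Q})=0$, and $f_k(\Upsilon)=f_k(\Gamma)-\beta_k(\Gamma)+\beta_{k-1}(\Gamma)$; an $i$-dimensional spanning tree of $\Delta$ is a spanning tree of $\Delta_{(i)}$. (The existence of the integers $c_{\sigma\theta}$ is guaranteed since $\operatorname{im}\partial_{\Delta,i}=\operatorname{im}\partial_{\Upsilon,i}$ under these hypotheses.) *)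

(* Defs.v *)
From HB Require Import structures.
From mathcomp Require Import all_boot all_order all_algebra.
Set Implicit Arguments. Unset Strict Implicit. Unset Printing Implicit Defensive.
Import Order.TTheory GRing.Theory Num.Theory.
Local Open Scope ring_scope.

(* Complexes contain the empty face (augmented chain complex => reduced
   homology).  The fixed orientation of a face is the increasing order of
   its vertices.  Faces are indexed by their size m = dim + 1. *)

Definition is_complex n (D : {set {set 'I_n}}) : Prop :=
  set0 \in D /\ (forall s t : {set 'I_n}, s \in D -> t \subset s -> t \in D).

Definition faces n (G : {set {set 'I_n}}) (m : nat) : {set {set 'I_n}} :=
  [set s in G | #|s| == m].

Definition skelsz n (G : {set {set 'I_n}}) (m : nat) : {set {set 'I_n}} :=
  [set s in G | (#|s| <= m)%N].

Definition inc (R : pzRingType) n (t s : {set 'I_n}) : R :=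
  \sum_(v in s) ((t == s :\ v)%:R * (-1) ^+ #|[set u in s | (val u < val v)%N]|).

Notation chain R n := {ffun {set 'I_n} -> R}.

Definition ech (R : pzRingType) n (s : {set 'I_n}) : chain R n :=
  [ffun t => (t == s)%:R].

Definition bd (R : pzRingType) n (c : chain R n) : chain R n :=
  [ffun t => \sum_s c s * inc R t s].

Definition bdT (R : pzRingType) n (D : {set {set 'I_n}}) (m : nat)
    (c : chain R n) : chain R n :=
  [ffun s => if s \in faces D m then \sum_t inc R t s * c t else 0].

Definition supp_on (R : pzRingType) n (c : chain R n) (A : {set {set 'I_n}}) :=
  forall t, c t != 0 -> t \in A.

(* \tilde H_{m-1}(G; R) = 0 *)
Definition hvanish (R : pzRingType) n (G : {set {set 'I_n}}) (m : nat) : Prop :=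
  forall c : chain R n, supp_on c (faces G m) -> bd c = 0 ->
    exists b : chain R n, supp_on b (faces G m.+1) /\ bd b = c.

Definition bdmx n (G : {set {set 'I_n}}) (m : nat)
    : 'M[rat]_(#|{set 'I_n}|) :=
  \matrix_(a, b) (if enum_val b \in faces G m
                  then inc rat (enum_val a) (enum_val b) else 0).

(* beta_{m-1}(G) = dim ker d_{m-1} - dim im d_m over Q *)
Definition betti n (G : {set {set 'I_n}}) (m : nat) : int :=
  (#|faces G m|)%:Z - (\rank (bdmx G m))%:Z - (\rank (bdmx G m.+1))%:Z.

Definition pure n (D : {set {set 'I_n}}) (d : nat) : Prop :=
  (forall s, s \in D -> (#|s| <= d.+1)%N) /\
  (forall s, s \in D -> exists t, [/\ t \in D, s \subset t & #|t| = d.+1]).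

Definition APC n (D : {set {set 'I_n}}) (d : nat) : Prop :=
  pure D d /\ (forall m : nat, (m <= d)%N -> hvanish rat D m).

Definition spanning_tree n (G : {set {set 'I_n}}) (k : nat)
    (U : {set {set 'I_n}}) : Prop :=
  [/\ is_complex U, U \subset G, skelsz U k = skelsz G k,
      hvanish int U k.+1 &
      hvanish rat U k /\
      (#|faces U k.+1|)%:Z = (#|faces G k.+1|)%:Z - betti G k.+1 + betti G k].

Definition idim_spanning_tree n (D : {set {set 'I_n}}) (i : nat)
    (U : {set {set 'I_n}}) : Prop :=
  spanning_tree (skelsz D i.+1) i U.

(* L_{D,i} = d_{i+1} d^*_{i+1} *)
Definition Lap n (D : {set {set 'I_n}}) (i : nat) (c : chain int n) : chain int n :=
  bd (bdT D i.+2 c).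

Definition Theta n (D U : {set {set 'I_n}}) (i : nat) : {set {set 'I_n}} :=
  faces D i.+1 :\: faces U i.+1.

Definition ell n (D : {set {set 'I_n}}) (i : nat) (x y : {set 'I_n}) : int :=
  Lap D i (ech int x) y.

Definition hat n (U : {set {set 'I_n}}) (i : nat)
    (c : {set 'I_n} -> {set 'I_n} -> int) (x : {set 'I_n}) : chain int n :=
  [ffun t => ech int x t - \sum_(s in faces U i.+1) c s x * ech int s t].

(* Main.v *)
Require Import Defs.
From HB Require Import structures.
From mathcomp Require Import all_boot all_order all_algebra.
Import Order.TTheory GRing.Theory Num.Theory.
Set Implicit Arguments. Unset Strict Implicit. Unset Printing Implicit Defensive.
Local Open Scope ring_scope.

Definition cnt n (u : {set 'I_n}) (v : 'I_n) := #|[set x in u | (val x < val v)%N]|.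

Lemma cnt_lt n (u : {set 'I_n}) v w : (val v < val w)%N -> cnt (u :\ w) v = cnt u v.
Proof.
move=> lt; rewrite /cnt; apply: eq_card => x; rewrite !inE.
case: (ltnP (val x) (val v)) => h; last by rewrite !andbF.
rewrite !andbT andb_idl // => _; apply/eqP => exw; move: h; rewrite exw.
by move=> h; move: (ltn_trans h lt); rewrite ltnn.
Qed.

Lemma cnt_gt n (u : {set 'I_n}) v w : v \in u -> (val v < val w)%N ->
  (cnt (u :\ v) w).+1 = cnt u w.
Proof.
move=> vu lt; rewrite /cnt.
have -> : [set x in u | (val x < val w)%N] = v |: [set x in u :\ v | (val x < val w)%N].
  apply/setP => x; rewrite !inE; case: (eqVneq x v) => [->|] //=; by rewrite vu lt.
by rewrite cardsU1 !inE eqxx.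
Qed.

Lemma sgn_anti n (u : {set 'I_n}) v w : v \in u -> (val v < val w)%N ->
  (-1) ^+ cnt u v * (-1) ^+ cnt (u :\ v) w =
  - ((-1) ^+ cnt u w * (-1) ^+ cnt (u :\ w) v) :> int.
Proof.
move=> vu lt; rewrite (cnt_lt u lt) -(cnt_gt vu lt) exprS.
by rewrite mulN1r mulNr opprK mulrC.
Qed.

Lemma sum_pick n (F : {set 'I_n} -> int) a : \sum_s (s == a)%:R * F s = F a.
Proof.
rewrite (bigD1 a) //= eqxx mul1r big1 ?addr0 // => s /negbTE ->; by rewrite mul0r.
Qed.

Lemma key n (t u : {set 'I_n}) : \sum_s inc int s u * inc int t s = 0.
Proof.
rewrite (eq_bigr (fun s => \sum_(v in u) (s == u :\ v)%:R * ((-1) ^+ cnt u v * inc int t s))); last first.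
  by move=> s _; rewrite {1}/inc mulr_suml; apply: eq_bigr => v _; rewrite mulrA.
rewrite exchange_big /=.
rewrite (eq_bigr (fun v => (-1) ^+ cnt u v * inc int t (u :\ v))); last by move=> v _; rewrite sum_pick.
rewrite /inc.
under eq_bigr => v _ do rewrite mulr_sumr.
set f := fun v w => (t == u :\ v :\ w)%:R * ((-1) ^+ cnt u v * (-1) ^+ cnt (u :\ v) w) : int.
set S := (X in X = 0).
have ES : S = \sum_v \sum_w (if (v \in u) && (w \in u :\ v) then f v w else 0).
  rewrite /S big_mkcond /=; apply: eq_bigr => v _.
  case: (boolP (v \in u)) => vu /=; last by rewrite big1.
  rewrite big_mkcond /=; apply: eq_bigr => w _; case: (w \in u :\ v) => //.
  by rewrite /f mulrCA.
have anti : forall v w, (if (v \in u) && (w \in u :\ v) then f v w else 0) =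
    - (if (w \in u) && (v \in u :\ w) then f w v else 0).
  move=> v w; rewrite !inE.
  case: (eqVneq w v) => [->|nwv]; first by rewrite /= andbF oppr0.
  idtac.
  case vu: (v \in u); case wu: (w \in u) => /=; rewrite ?oppr0 //.
  have E : u :\ w :\ v = u :\ v :\ w by rewrite !setDDl setUC.
  rewrite /f E -mulrN; congr (_ * _).
  have : val v != val w by apply: contra nwv => /eqP h; apply/eqP/val_inj.
  rewrite neq_ltn => /orP [] lt; first by rewrite sgn_anti.
  by rewrite (sgn_anti wu lt) opprK.
have : S = - S.
  rewrite {1}ES exchange_big /= ES -sumrN; apply: eq_bigr => v _.
  rewrite -sumrN; apply: eq_bigr => w _; exact: anti.
move=> h; have : S *+ 2 = 0 by rewrite mulr2n {1}h addNr.
by move/eqP; rewrite mulrn_eq0 /= => /eqP.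
Qed.

Lemma bdbd n (x : chain int n) : bd (bd x) = 0.
Proof.
apply/ffunP => t; rewrite !ffunE.
under eq_bigr => s _ do rewrite ffunE mulr_suml.
rewrite exchange_big /= big1 // => u _.
rewrite (eq_bigr (fun s => x u * (inc int s u * inc int t s))); last by move=> s _; rewrite mulrA.
by rewrite -mulr_sumr key mulr0.
Qed.
Lemma sum_pick' n (F : {set 'I_n} -> int) a : \sum_s F s * (s == a)%:R = F a.
Proof. by rewrite -(sum_pick F a); apply: eq_bigr => s _; rewrite mulrC. Qed.

Lemma Lap_ech n (D : {set {set 'I_n}}) i x y : Lap D i (ech int x) y =
  \sum_s (if s \in faces D i.+2 then inc int x s * inc int y s else 0).
Proof.
rewrite /Lap /bd ffunE; apply: eq_bigr => s _; rewrite /bdT ffunE.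
case: (s \in faces D i.+2); last by rewrite mul0r.
congr (_ * _); rewrite -(sum_pick' (fun t => inc int t s) x).
by apply: eq_bigr => t _; rewrite ffunE.
Qed.

Lemma Lap_sym n (D : {set {set 'I_n}}) i x y :
  Lap D i (ech int x) y = Lap D i (ech int y) x.
Proof.
rewrite !Lap_ech; apply: eq_bigr => s _; by case: ifP; rewrite // mulrC.
Qed.

Lemma inc_supp n (t s : {set 'I_n}) : inc int t s != 0 -> exists2 v, v \in s & t = s :\ v.
Proof.
rewrite /inc => h; case: (boolP [exists v in s, t == s :\ v]).
  by case/exists_inP => v vs /eqP ->; exists v.
move/exists_inP => H; exfalso; move/eqP: h; apply.
rewrite big1 // => v vs; case: (eqVneq t (s :\ v)) => [e|]; last by rewrite mul0r.
by case: H; exists v => //; apply/eqP.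
Qed.

Lemma Lap_supp n (D : {set {set 'I_n}}) i c t : is_complex D ->
  Lap D i c t != 0 -> t \in faces D i.+1.
Proof.
move=> [_ cD]; rewrite /Lap /bd ffunE => h.
have [s _] : exists2 s, true & bdT D i.+2 c s * inc int t s != 0.
  case: (boolP [exists s, bdT D i.+2 c s * inc int t s != 0]).
    by case/existsP => s hs; exists s.
  move/existsP => H; exfalso; move/eqP: h; apply.
  by rewrite big1 // => s _; case: (eqVneq (bdT D i.+2 c s * inc int t s) 0) => // hs; case: H; exists s.
rewrite mulf_eq0 negb_or => /andP [h1 /inc_supp [v vs ->]].
have sF : s \in faces D i.+2.
  by move: h1; rewrite /bdT ffunE; case: ifP => //; rewrite eqxx.
move: sF; rewrite !inE => /andP [sD /eqP cs]; apply/andP; split.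
  by apply: (cD s) => //; apply: subD1set.
by move: cs; rewrite (cardsD1 v) vs add1n => -[->].
Qed.
Lemma z0 n (t : {set 'I_n}) : (0 : chain int n) t = 0.
Proof. by rewrite ffunE. Qed.

Lemma bd_hat n (U : {set {set 'I_n}}) i c th :
  bd (ech int th) = [ffun t => \sum_(s in faces U i.+1) c s th * bd (ech int s) t] ->
  bd (hat U i c th) = 0.
Proof.
move=> H; apply/ffunP => t; rewrite z0 ffunE.
under eq_bigr do rewrite ffunE mulrBl.
rewrite sumrB.
have -> : \sum_s ech int th s * inc int t s = bd (ech int th) t by rewrite ffunE.
rewrite H ffunE.
under [X in _ - X = _]eq_bigr do rewrite mulr_suml.
rewrite exchange_big /=; apply/eqP; rewrite subr_eq0; apply/eqP; apply: eq_bigr => r _.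
rewrite ffunE mulr_sumr; apply: eq_bigr => s _; by rewrite mulrA.
Qed.

Theorem claim6 (n : nat) (D : {set {set 'I_n}}) (d i : nat)
    (U : {set {set 'I_n}}) (c : {set 'I_n} -> {set 'I_n} -> int) :
  is_complex D -> APC D d -> (i < d)%N ->
  idim_spanning_tree D i U -> hvanish int U i ->
  (forall th, th \in Theta D U i ->
     bd (ech int th) =
       [ffun t => \sum_(s in faces U i.+1) c s th * bd (ech int s) t]) ->
  forall th, th \in Theta D U i ->
    Lap D i (ech int th) =
      [ffun t => \sum_(s in Theta D U i) ell D i s th * hat U i c s t].
Proof.
move=> cD _ _ [cU sUD _ hU _] _ Hc th thT.
have UD : forall s, s \in U -> s \in D /\ (#|s| <= i.+1)%N.
  by move=> s /(subsetP sUD); rewrite inE => /andP [? ?].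
have FU : forall s, s \in faces U i.+1 -> s \in faces D i.+1.
  by move=> s; rewrite !inE => /andP [/UD [-> _] ->].
have noF2 : forall s, s \notin faces U i.+2.
  move=> s; rewrite inE; apply/negP => /andP [/UD [_ h] /eqP e].
  by rewrite e ltnn in h.
set X := [ffun t => Lap D i (ech int th) t -
            \sum_(s in Theta D U i) ell D i s th * hat U i c s t].
have suppX : supp_on X (faces U i.+1).
  move=> t; rewrite ffunE => hX; apply/negPn/negP => tU; move: hX; apply/negP; rewrite negbK; apply/eqP.
  rewrite (eq_bigr (fun s => ell D i s th * (t == s)%:R)); last first.
    move=> s _; rewrite /hat ffunE big1 ?subr0 ?ffunE // => r rU; rewrite ffunE.
    have : t != r by apply: contraNneq tU => ->.
    by move/negbTE ->; rewrite mulr0.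
  case: (boolP (t \in Theta D U i)) => tT.
    rewrite (bigD1 t) //= eqxx mulr1 big1 => [|s /andP [_ ne]]; last first.
      by rewrite eq_sym (negbTE ne) mulr0.
    by rewrite addr0 /ell Lap_sym subrr.
  rewrite big1 => [|s sT]; last first.
    have : t != s by apply: contraNneq tT => ->.
    by move/negbTE ->; rewrite mulr0.
  rewrite subr0; apply/eqP; apply: contraR tT => /(Lap_supp cD) tD.
  by rewrite inE tD tU.
have bdX : bd X = 0.
  apply/ffunP => t; rewrite z0 ffunE.
  under eq_bigr do rewrite ffunE mulrBl.
  rewrite sumrB.
  have -> : \sum_s Lap D i (ech int th) s * inc int t s = 0.
    by move/ffunP: (bdbd (bdT D i.+2 (ech int th))) => /(_ t); rewrite z0 ffunE.
  rewrite sub0r.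
  under eq_bigr do rewrite mulr_suml.
  rewrite exchange_big /= big1 ?oppr0 // => s sT.
  move/ffunP: (bd_hat (Hc s sT)) => /(_ t); rewrite z0 ffunE => h.
  rewrite (eq_bigr (fun r => ell D i s th * (hat U i c s r * inc int t r))).
    by rewrite -mulr_sumr h mulr0.
  by move=> r _; rewrite mulrA.
have [b [sb eb]] := hU X suppX bdX.
have b0 : b = 0.
  apply/ffunP => t; rewrite z0; case: (eqVneq (b t) 0) => // /sb.
  by rewrite (negbTE (noF2 t)).
have X0 : X = 0.
  rewrite -eb b0; apply/ffunP => t; rewrite !ffunE big1 // => s _.
  by rewrite z0 mul0r.
apply/ffunP => t; move/ffunP: X0 => /(_ t); rewrite !ffunE => /eqP.
by rewrite subr_eq0 => /eqP.
Qed.
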